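(* Let $\mathcal I$ be a finite set with $|\mathcal I|\ge 2$, $\nu\in(0,1)$, and $L\ge 1$ an integer. Define functions on $\mathbb R^{\mathcal I}$ by backward recursion: $$V_L^*(\mathbf m)=\max_{a\in\mathcal I}\frac{e^{m[a]}}{\sum_{l\in\mathcal I}e^{m[l]}},$$ and for $k=L-1,L-2,\dots,0$ and $a\in\mathcal I$, $$q_k(\mathbf m,a)=\int_0^\infty V_{k+1}^*\big(\mathbf m+J(y)\boldsymbol\delta[a]\big)\,f(y\mid\mathbf m,a)\,dy,\qquad V_k^*(\mathbf m)=\max_{a\in\mathcal I}q_k(\mathbf m,a),$$ where $J(y)=(1-\nu)y+\ln\nu$, $\boldsymbol\delta[a]\in\mathbb R^{\mathcal I}$ is the vector with entries $\delta[a,x]$, $x\in\mathcal I$, and, with $p_a(\mathbf m)=e^{m[a]}/\sum_{l\in\mathcal I}e^{m[l]}$, $$f(y\mid\mathbf m,a)=p_a(\mathbf m)\,\nu e^{-\nu y}+\big(1-p_a(\mathbf m)\big)e^{-y},\quad y\ge 0.$$ Then for every $k\in\{0,\dots,L-1\}$, $\mathbf m\in\mathbb R^{\mathcal I}$ and $a\in\mathcal I$, $$q_k(\mathbf m,a)\ \ge\ q_k^{LB}(\mathbf m,a):=\frac{1}{\sum_{l\in\mathcal I}e^{m[l]}}\Big[\xi(a;\mathbf m)+\exp\Big\{\frac{\min_{x_i\neq x_j}\big(m[x_i]-\nu m[x_j]\big)}{1-\nu}\Big\}\,h(\nu)\sum_{n=1}^{L-k-1}g(\nu)^n\Big],$$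 (where $\sum_{n=1}^{L-k-1}g(\nu)^n=\frac{g(\nu)-g(\nu)^{L-k}}{1-g(\nu)}$ when $g(\nu)\ne1$), and $$q_k(\mathbf m,a)\ \le\ q_k^{UB}(\mathbf m,a):=\frac{[1+h(\nu)]^{L-k-1}}{\sum_{l\in\mathcal I}e^{m[l]}}\,\xi(a;\mathbf m).$$ Moreover, if $x_{[1]},x_{[2]},\dots$ is an ordering of $\mathcal I$ with $m[x_{[1]}]\ge m[x_{[2]}]\ge\cdots$, then for every $k\in\{0,\dots,L-1\}$, $$q_k^{LB}(\mathbf m,x_{[2]})=\max_{a\in\mathcal I}q_k^{LB}(\mathbf m,a)\le V_k^*(\mathbf m)\le \max_{a\in\mathcal I}q_k^{UB}(\mathbf m,a)=q_k^{UB}(\mathbf m,x_{[2]}).$$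
   Context: The minimum $\min_{x_i\neq x_j}$ ranges over ordered pairs of distinct elements of $\mathcal I$. For $a\in\mathcal I$, $M_a=\max_{\hat a\neq a}m[\hat a]$ and $$\xi(a;\mathbf m)=\begin{cases}\exp\{m[a]\}, & \text{if } M_a-m[a]<\ln\nu,\\ \exp\{M_a\}+h(\nu)\exp\Big\{\dfrac{m[a]-\nu M_a}{1-\nu}\Big\}, & \text{otherwise,}\end{cases}$$ $h(\nu)=\exp\{\frac{\nu}{1-\nu}\ln\nu\}-\exp\{\frac{\ln\nu}{1-\nu}\}>0$ and $g(\nu)=\exp\{\frac{\ln\nu}{1-\nu}\}\big[\frac{1}{1+\nu}-\frac{\ln\nu}{1-\nu}\big]>0$. Interpretation: $\mathbf m$ is the log-belief (preference) vector over beam indices, $q_k$ the Q-function and $V_k^*$ the optimal value (maximal probability of correct alignment at the end of $L$ beam-alignment slots). *)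

(* Defs.v *)
From Stdlib Require Import Reals Lra List ClassicalEpsilon.
Open Scope R_scope.

(* The finite index set I is {0,...,n-1}; vectors in R^I are functions nat -> R
   (values outside {0..n-1} are irrelevant). *)

(* maximum / minimum of a (nonempty) list of reals; default 0 on nil *)
Definition maxl (l : list R) : R :=
  match l with nil => 0 | x :: t => fold_right Rmax x t end.
Definition minl (l : list R) : R :=
  match l with nil => 0 | x :: t => fold_right Rmin x t end.

Definition maxI (n : nat) (F : nat -> R) : R := maxl (map F (seq 0 n)).

Definition sumexp (n : nat) (m : nat -> R) : R :=
  fold_right Rplus 0 (map (fun l => exp (m l)) (seq 0 n)).

Definition pa (n : nat) (m : nat -> R) (a : nat) : R := exp (m a) / sumexp n m.

Definition delta (a x : nat) : R := if Nat.eqb x a then 1 else 0.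

Definition shift (m : nat -> R) (a : nat) (t : R) : nat -> R :=
  fun x => m x + t * delta a x.

Definition J (nu y : R) : R := (1 - nu) * y + ln nu.

Definition dens (n : nat) (nu : R) (m : nat -> R) (a : nat) (y : R) : R :=
  pa n m a * nu * exp (- nu * y) + (1 - pa n m a) * exp (- y).

Definition is_int0inf (f : R -> R) (l : R) : Prop :=
  exists pr : (forall T : R, Riemann_integrable f 0 T),
    forall eps : R, eps > 0 -> exists M : R, forall T : R, T >= M ->
      Rabs (RiemannInt (pr T) - l) < eps.

Definition int0inf (f : R -> R) : R := epsilon (inhabits 0) (is_int0inf f).

(* Vrev j = V^*_{L-j} : backward recursion indexed by the number of remaining steps *)
Fixpoint Vrev (n : nat) (nu : R) (j : nat) (m : nat -> R) : R :=
  match j with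
  | O => maxI n (fun a => pa n m a)
  | S j' => maxI n (fun a =>
      int0inf (fun y => Vrev n nu j' (shift m a (J nu y)) * dens n nu m a y))
  end.

Definition Vstar (n : nat) (nu : R) (L k : nat) (m : nat -> R) : R :=
  Vrev n nu (L - k) m.

Definition qk (n : nat) (nu : R) (L k : nat) (m : nat -> R) (a : nat) : R :=
  int0inf (fun y => Vstar n nu L (S k) (shift m a (J nu y)) * dens n nu m a y).

Definition hnu (nu : R) : R :=
  exp (nu / (1 - nu) * ln nu) - exp (ln nu / (1 - nu)).

Definition gnu (nu : R) : R :=
  exp (ln nu / (1 - nu)) * (1 / (1 + nu) - ln nu / (1 - nu)).

Definition Mexc (n : nat) (m : nat -> R) (a : nat) : R :=
  maxl (map m (filter (fun x => negb (Nat.eqb x a)) (seq 0 n))).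

Definition xi (n : nat) (nu : R) (a : nat) (m : nat -> R) : R :=
  if Rlt_dec (Mexc n m a - m a) (ln nu) then exp (m a)
  else exp (Mexc n m a) + hnu nu * exp ((m a - nu * Mexc n m a) / (1 - nu)).

Definition minpair (n : nat) (nu : R) (m : nat -> R) : R :=
  minl (map (fun p : nat * nat => m (fst p) - nu * m (snd p))
          (filter (fun p : nat * nat => negb (Nat.eqb (fst p) (snd p)))
                  (list_prod (seq 0 n) (seq 0 n)))).

Definition geomsum (g : R) (N : nat) : R :=
  fold_right Rplus 0 (map (fun i => g ^ i) (seq 1 N)).

Definition qLB (n : nat) (nu : R) (L k : nat) (m : nat -> R) (a : nat) : R :=
  / sumexp n m * (xi n nu a m
     + exp (minpair n nu m / (1 - nu)) * hnu nu * geomsum (gnu nu) (L - k - 1)).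

Definition qUB (n : nat) (nu : R) (L k : nat) (m : nat -> R) (a : nat) : R :=
  (1 + hnu nu) ^ (L - k - 1) / sumexp n m * xi n nu a m.

(* Main.v *)
Require Import Defs.
From Stdlib Require Import Reals List Lra Lia FunctionalExtensionality ClassicalEpsilon.
From Coquelicot Require Import Coquelicot.
Open Scope R_scope.


Definition cvinf (G : R -> R) (l : R) := forall eps, eps > 0 ->
  exists M, forall T, T >= M -> Rabs (G T - l) < eps.

Lemma cvinf_unique G l1 l2 : cvinf G l1 -> cvinf G l2 -> l1 = l2.
Proof.
  intros H1 H2. destruct (Req_dec l1 l2) as [|Hne]; auto.
  set (e := Rabs (l1 - l2) / 2).
  assert (He : e > 0) by (unfold e; assert (l1 - l2 <> 0) by lra; pose proof (Rabs_pos_lt _ H); lra).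
  destruct (H1 e He) as [M1 HM1]. destruct (H2 e He) as [M2 HM2].
  specialize (HM1 (Rmax M1 M2) (Rle_ge _ _ (Rmax_l _ _))).
  specialize (HM2 (Rmax M1 M2) (Rle_ge _ _ (Rmax_r _ _))).
  exfalso. unfold e in *.
  assert (Rabs (l1 - l2) <= Rabs (G (Rmax M1 M2) - l1) + Rabs (G (Rmax M1 M2) - l2)).
  { replace (l1 - l2) with (-(G (Rmax M1 M2) - l1) + (G (Rmax M1 M2) - l2)) by ring.
    eapply Rle_trans; [apply Rabs_triang|]. rewrite Rabs_Ropp; lra. }
  lra.
Qed.

Lemma cvinf_le G1 G2 l1 l2 T0 : (forall T, T >= T0 -> G1 T <= G2 T) ->
  cvinf G1 l1 -> cvinf G2 l2 -> l1 <= l2.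
Proof.
  intros Hle H1 H2. destruct (Rle_dec l1 l2) as [|Hn]; auto. exfalso.
  set (e := (l1 - l2) / 2).
  assert (He : e > 0) by (unfold e; lra).
  destruct (H1 e He) as [M1 HM1]. destruct (H2 e He) as [M2 HM2].
  set (T := Rmax T0 (Rmax M1 M2)).
  assert (A1 : T >= M1) by (unfold T; apply Rle_ge; eapply Rle_trans; [apply Rmax_l|apply Rmax_r]).
  assert (A2 : T >= M2) by (unfold T; apply Rle_ge; eapply Rle_trans; [apply Rmax_r|apply Rmax_r]).
  assert (A0 : T >= T0) by (unfold T; apply Rle_ge; apply Rmax_l).
  specialize (HM1 T A1). specialize (HM2 T A2). specialize (Hle T A0).
  apply Rabs_def2 in HM1. apply Rabs_def2 in HM2. unfold e in *. lra.
Qed.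

Lemma cvinf_ext G H l T0 : (forall T, T >= T0 -> G T = H T) -> cvinf H l -> cvinf G l.
Proof.
  intros He Hc eps Heps. destruct (Hc eps Heps) as [M HM]. exists (Rmax M T0).
  intros T HT. rewrite He. apply HM. apply Rle_ge; apply Rle_trans with (Rmax M T0); [apply Rmax_l|lra].
  apply Rle_ge; apply Rle_trans with (Rmax M T0); [apply Rmax_r|lra].
Qed.

Lemma cvinf_plus G G2 l1 l2 : cvinf G l1 -> cvinf G2 l2 -> cvinf (fun T => G T + G2 T) (l1 + l2).
Proof.
  intros H1 H2 eps He. destruct (H1 (eps/2)) as [M1 HM1]; [lra|].
  destruct (H2 (eps/2)) as [M2 HM2]; [lra|]. exists (Rmax M1 M2). intros T HT.
  assert (A1 : T >= M1) by (apply Rle_ge; apply Rle_trans with (Rmax M1 M2); [apply Rmax_l|lra]).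
  assert (A2 : T >= M2) by (apply Rle_ge; apply Rle_trans with (Rmax M1 M2); [apply Rmax_r|lra]).
  specialize (HM1 T A1). specialize (HM2 T A2).
  replace (G T + G2 T - (l1 + l2)) with ((G T - l1) + (G2 T - l2)) by ring.
  eapply Rle_lt_trans; [apply Rabs_triang|lra].
Qed.

Lemma cvinf_scal G l c : cvinf G l -> cvinf (fun T => c * G T) (c * l).
Proof.
  intros H eps He. destruct (H (eps / (Rabs c + 1))) as [M HM].
  { apply Rdiv_lt_0_compat; [lra|]. pose proof (Rabs_pos c); lra. }
  exists M. intros T HT. specialize (HM T HT).
  replace (c * G T - c * l) with (c * (G T - l)) by ring. rewrite Rabs_mult.
  pose proof (Rabs_pos c). pose proof (Rabs_pos (G T - l)).
  apply Rle_lt_trans with (Rabs c * (eps / (Rabs c + 1))).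
  { apply Rmult_le_compat_l; lra. }
  apply Rlt_le_trans with ((Rabs c + 1) * (eps / (Rabs c + 1))).
  { apply Rmult_lt_compat_r; [apply Rdiv_lt_0_compat; lra| lra]. }
  right. field. lra.
Qed.

Lemma cvinf_const c : cvinf (fun _ => c) c.
Proof. intros eps He. exists 0. intros. rewrite Rminus_diag, Rabs_R0. lra. Qed.

Lemma cvinf_expneg a : a > 0 -> cvinf (fun T => exp (- a * T)) 0.
Proof.
  intros Ha eps He. exists (- ln eps / a + 1). intros T HT.
  rewrite Rminus_0_r, Rabs_pos_eq by (left; apply exp_pos).
  rewrite <- (exp_ln eps) by lra. apply exp_increasing.
  apply Rge_le in HT.
  apply Rmult_le_compat_l with (r := a) in HT; [|lra].
  replace (a * (- ln eps / a + 1)) with (- ln eps + a) in HT by (field; lra). lra.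
Qed.

Lemma is_int0inf_iff f l : is_int0inf f l <->
  (forall T, ex_RInt f 0 T) /\ cvinf (fun T => RInt f 0 T) l.
Proof.
  split.
  - intros [pr Hpr]. split.
    + intros T. apply ex_RInt_Reals_1, pr.
    + intros eps He. destruct (Hpr eps He) as [M HM]. exists M. intros T HT.
      rewrite (RInt_Reals f 0 T (pr T)). apply HM; auto.
  - intros [Hex Hc]. exists (fun T => ex_RInt_Reals_0 f 0 T (Hex T)).
    intros eps He. destruct (Hc eps He) as [M HM]. exists M. intros T HT.
    rewrite <- RInt_Reals. apply HM; auto.
Qed.

Lemma int0inf_eq f l : is_int0inf f l -> int0inf f = l.
Proof.
  intros H. unfold int0inf.
  assert (He : exists x, is_int0inf f x) by (exists l; auto).
  pose proof (epsilon_spec (inhabits 0) (is_int0inf f) He) as Hs.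
  apply is_int0inf_iff in H. apply is_int0inf_iff in Hs.
  eapply cvinf_unique; [apply Hs|apply H].
Qed.

Lemma is_int0inf_scal f l c : is_int0inf f l -> is_int0inf (fun y => c * f y) (c * l).
Proof.
  rewrite !is_int0inf_iff. intros [Hex Hc]. split.
  - intros T. apply (ex_RInt_scal f 0 T c (Hex T)).
  - apply cvinf_ext with (H := fun T => c * RInt f 0 T) (T0 := 0).
    + intros T _. apply (RInt_scal f 0 T c (Hex T)).
    + apply cvinf_scal; auto.
Qed.

Lemma is_int0inf_plus f g l1 l2 : is_int0inf f l1 -> is_int0inf g l2 ->
  is_int0inf (fun y => f y + g y) (l1 + l2).
Proof.
  rewrite !is_int0inf_iff. intros [Hex Hc] [Hex2 Hc2]. split.
  - intros T. apply (ex_RInt_plus f g 0 T (Hex T) (Hex2 T)).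
  - apply cvinf_ext with (H := fun T => RInt f 0 T + RInt g 0 T) (T0 := 0).
    + intros T _. apply (RInt_plus f g 0 T (Hex T) (Hex2 T)).
    + apply cvinf_plus; auto.
Qed.

Lemma is_int0inf_le f g l1 l2 : is_int0inf f l1 -> is_int0inf g l2 ->
  (forall y, 0 <= y -> f y <= g y) -> l1 <= l2.
Proof.
  rewrite !is_int0inf_iff. intros [Hex Hc] [Hex2 Hc2] Hle.
  apply (cvinf_le _ _ _ _ 0 (fun T HT => RInt_le f g 0 T (Rge_le _ _ HT) (Hex T) (Hex2 T)
     (fun x Hx => Hle x (Rlt_le _ _ (proj1 Hx)))) Hc Hc2).
Qed.

Lemma RInt_mono_T f T1 T2 : (forall T, ex_RInt f 0 T) -> (forall y, 0 <= y -> 0 <= f y) ->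
  0 <= T1 <= T2 -> RInt f 0 T1 <= RInt f 0 T2.
Proof.
  intros Hex Hp HT.
  rewrite <- (RInt_Chasles f 0 T1 T2 (Hex T1)).
  2:{ apply (ex_RInt_Chasles_2 f 0 T1 T2); [lra| apply Hex]. }
  assert (0 <= RInt f T1 T2).
  { apply RInt_ge_0; [lra| |].
    - apply (ex_RInt_Chasles_2 f 0 T1 T2); [lra| apply Hex].
    - intros x Hx; apply Hp; lra. }
  change (plus (RInt f 0 T1) (RInt f T1 T2)) with (RInt f 0 T1 + RInt f T1 T2). lra.
Qed.

Lemma int0_partial_le f l : is_int0inf f l -> (forall y, 0 <= y -> 0 <= f y) ->
  forall T, 0 <= T -> RInt f 0 T <= l.
Proof.
  rewrite is_int0inf_iff. intros [Hex Hc] Hp T HT.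
  apply (cvinf_le (fun _ => RInt f 0 T) (fun T => RInt f 0 T) _ _ T).
  - intros T' HT'. apply RInt_mono_T; auto; lra.
  - apply cvinf_const.
  - auto.
Qed.

Lemma int0_exists f B : (forall T, ex_RInt f 0 T) -> (forall y, 0 <= y -> 0 <= f y) ->
  (forall T, 0 <= T -> RInt f 0 T <= B) -> exists l, is_int0inf f l.
Proof.
  intros Hex Hp HB.
  set (E := fun v => exists T, 0 <= T /\ v = RInt f 0 T).
  assert (Hb : bound E) by (exists B; intros v [T [HT ->]]; auto).
  assert (Hne : exists v, E v) by (exists (RInt f 0 0); exists 0; split; [lra|auto]).
  destruct (completeness E Hb Hne) as [l [Hub Hlub]].
  exists l. apply is_int0inf_iff. split; auto.
  intros eps He.
  destruct (Rlt_dec (l - eps) (l - eps)) as [|_]; [lra|].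
  assert (Hex2 : exists T0, 0 <= T0 /\ RInt f 0 T0 > l - eps).
  { apply Classical_Prop.NNPP. intros Hn.
    assert (is_upper_bound E (l - eps)).
    { intros v [T [HT ->]]. apply Rnot_lt_le. intros Hc. apply Hn. exists T; split; auto. }
    specialize (Hlub _ H). lra. }
  destruct Hex2 as [T0 [HT0 HT0v]]. exists T0. intros T HT.
  assert (RInt f 0 T <= l) by (apply Hub; exists T; split; auto; lra).
  assert (RInt f 0 T0 <= RInt f 0 T) by (apply RInt_mono_T; auto; lra).
  apply Rabs_def1; lra.
Qed.

Lemma int0_tail f C K a T0 : (forall T, ex_RInt f 0 T) -> a > 0 ->
  (forall T, T >= T0 -> RInt f 0 T = C - K * exp (- a * T)) -> is_int0inf f C.
Proof.
  intros Hex Ha HT. apply is_int0inf_iff. split; auto.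
  apply cvinf_ext with (H := fun T => C + (- K) * exp (- a * T)) (T0 := T0).
  - intros T H. rewrite HT; auto. ring.
  - assert (Hc : cvinf (fun T => C + - K * exp (- a * T)) (C + - K * 0)).
    { apply cvinf_plus; [apply cvinf_const|]. apply cvinf_scal. apply cvinf_expneg; auto. }
    rewrite Rmult_0_r, Rplus_0_r in Hc. exact Hc.
Qed.

Lemma fold_max_spec x t : (x <= fold_right Rmax x t) /\
  (forall y, In y t -> y <= fold_right Rmax x t) /\
  (fold_right Rmax x t = x \/ In (fold_right Rmax x t) t).
Proof.
  induction t as [|y t IH]; simpl.
  - split; [lra|]. split; [intros _ []|left; auto].
  - destruct IH as [H1 [H2 H3]]. split; [eapply Rle_trans; [apply H1|apply Rmax_r]|].
    split.
    + intros z [<-|Hz]; [apply Rmax_l|]. eapply Rle_trans; [apply H2; auto|apply Rmax_r].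
    + destruct (Rle_dec y (fold_right Rmax x t)).
      * rewrite Rmax_right by auto. destruct H3 as [H3|H3]; [left; auto|right; right; auto].
      * rewrite Rmax_left by lra. right; left; auto.
Qed.

Lemma maxl_spec l : l <> nil -> In (maxl l) l /\ forall x, In x l -> x <= maxl l.
Proof.
  destruct l as [|x t]; [congruence|]. intros _. simpl.
  destruct (fold_max_spec x t) as [H1 [H2 H3]]. split.
  - destruct H3; [left; auto|right; auto].
  - intros z [<-|Hz]; auto.
Qed.

Lemma maxl_char l v : In v l -> (forall x, In x l -> x <= v) -> maxl l = v.
Proof.
  intros Hv Hall. assert (l <> nil) by (intros ->; inversion Hv).
  destruct (maxl_spec l H) as [H1 H2]. apply Rle_antisym; auto.
Qed.

Lemma fold_min_spec x t : (fold_right Rmin x t <= x) /\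
  (forall y, In y t -> fold_right Rmin x t <= y) /\
  (fold_right Rmin x t = x \/ In (fold_right Rmin x t) t).
Proof.
  induction t as [|y t IH]; simpl.
  - split; [lra|]. split; [intros _ []|left; auto].
  - destruct IH as [H1 [H2 H3]]. split; [eapply Rle_trans; [apply Rmin_r|apply H1]|].
    split.
    + intros z [<-|Hz]; [apply Rmin_l|]. eapply Rle_trans; [apply Rmin_r|apply H2; auto].
    + destruct (Rle_dec y (fold_right Rmin x t)).
      * rewrite Rmin_left by auto. right; left; auto.
      * rewrite Rmin_right by lra. destruct H3 as [H3|H3]; [left; auto|right; right; auto].
Qed.

Lemma minl_spec l : l <> nil -> In (minl l) l /\ forall x, In x l -> minl l <= x.
Proof.
  destruct l as [|x t]; [congruence|]. intros _. simpl.
  destruct (fold_min_spec x t) as [H1 [H2 H3]]. split.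
  - destruct H3; [left; auto|right; auto].
  - intros z [<-|Hz]; auto.
Qed.

Lemma in_seq0 a n : In a (seq 0 n) <-> (a < n)%nat.
Proof. rewrite in_seq. lia. Qed.

Lemma in_nonnil {A} (x : A) l : In x l -> l <> nil.
Proof. intros H ->; inversion H. Qed.

Lemma maxI_ge n F a : (a < n)%nat -> F a <= maxI n F.
Proof.
  intros Ha. unfold maxI. assert (Hin : In (F a) (map F (seq 0 n))).
  { apply in_map, in_seq0; auto. }
  apply (maxl_spec _ (in_nonnil _ _ Hin)); auto.
Qed.

Lemma maxI_attained n F : (1 <= n)%nat -> exists a, (a < n)%nat /\ maxI n F = F a.
Proof.
  intros Hn. unfold maxI.
  assert (Hin : In (F 0%nat) (map F (seq 0 n))) by (apply in_map, in_seq0; lia).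
  destruct (maxl_spec _ (in_nonnil _ _ Hin)) as [H1 _].
  apply in_map_iff in H1. destruct H1 as [a [Ha1 Ha2]]. exists a. split; auto.
  apply in_seq0; auto.
Qed.

Lemma maxI_le n F B : (1 <= n)%nat -> (forall a, (a < n)%nat -> F a <= B) -> maxI n F <= B.
Proof.
  intros Hn H. destruct (maxI_attained n F Hn) as [a [Ha ->]]. auto.
Qed.

Lemma maxI_ext n F G : (forall a, (a < n)%nat -> F a = G a) -> maxI n F = maxI n G.
Proof.
  intros H. unfold maxI. f_equal. apply map_ext_in. intros a Ha. apply H, in_seq0; auto.
Qed.

Lemma maxI_mono n F G : (1 <= n)%nat -> (forall a, (a < n)%nat -> F a <= G a) -> maxI n F <= maxI n G.
Proof.
  intros Hn H. apply maxI_le; auto. intros a Ha. eapply Rle_trans; [apply H; auto|apply maxI_ge; auto].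
Qed.

Lemma maxI_at n F x : (x < n)%nat -> (forall a, (a < n)%nat -> F a <= F x) -> maxI n F = F x.
Proof.
  intros Hx H. apply Rle_antisym; [apply maxI_le; auto; lia|apply maxI_ge; auto].
Qed.

Lemma maxI_scal n F c : (1 <= n)%nat -> 0 <= c -> maxI n (fun a => c * F a) = c * maxI n F.
Proof.
  intros Hn Hc. destruct (maxI_attained n F Hn) as [x [Hx Hm]]. rewrite Hm.
  apply (maxI_at n (fun a => c * F a) x); auto. intros a Ha. apply Rmult_le_compat_l; auto. rewrite <- Hm. apply maxI_ge; auto.
Qed.

Lemma sumexp_S n m : sumexp (S n) m = sumexp n m + exp (m n).
Proof.
  unfold sumexp. rewrite seq_S, map_app, fold_right_app. simpl.
  rewrite Rplus_0_r. generalize (exp (m n)). intros c.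
  induction (map (fun l => exp (m l)) (seq 0 n)) as [|x t IH]; simpl; [ring|rewrite IH; ring].
Qed.

Lemma sumexp_ext n m m' : (forall x, (x < n)%nat -> m x = m' x) -> sumexp n m = sumexp n m'.
Proof.
  intros H. unfold sumexp. f_equal. apply map_ext_in. intros a Ha. rewrite H; auto. apply in_seq0; auto.
Qed.

Lemma sumexp_pos n m : (1 <= n)%nat -> 0 < sumexp n m.
Proof.
  induction n; intros Hn; [lia|]. rewrite sumexp_S. pose proof (exp_pos (m n)).
  destruct n; [unfold sumexp; simpl; lra|]. pose proof (IHn ltac:(lia)). lra.
Qed.

Lemma sumexp_add n m t : sumexp n (fun x => m x + t) = exp t * sumexp n m.
Proof.
  induction n; [unfold sumexp; simpl; ring|]. rewrite !sumexp_S, IHn, exp_plus. ring.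
Qed.

Lemma sumexp_shift n m a t : (a < n)%nat ->
  sumexp n (shift m a t) = sumexp n m - exp (m a) + exp (m a + t).
Proof.
  induction n; intros Ha; [lia|]. rewrite !sumexp_S.
  destruct (Nat.eq_dec a n) as [->|Hne].
  - rewrite (sumexp_ext n (shift m n t) m).
    + unfold shift, delta. rewrite Nat.eqb_refl, Rmult_1_r. ring.
    + intros x Hx. unfold shift, delta. destruct (Nat.eqb_spec x n); [lia|ring].
  - rewrite IHn by lia. unfold shift at 1, delta. destruct (Nat.eqb_spec n a); [lia|]. rewrite Rmult_0_r, Rplus_0_r. ring.
Qed.

Definition Lexc n a := filter (fun x => negb (Nat.eqb x a)) (seq 0 n).

Lemma in_Lexc n a x : In x (Lexc n a) <-> (x < n)%nat /\ x <> a.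
Proof.
  unfold Lexc. rewrite filter_In, in_seq0. destruct (Nat.eqb_spec x a); simpl; intuition.
Qed.

Lemma Mexc_ge n m a b : (b < n)%nat -> b <> a -> m b <= Mexc n m a.
Proof.
  intros Hb Hba. unfold Mexc. fold (Lexc n a).
  assert (Hin : In (m b) (map m (Lexc n a))) by (apply in_map, in_Lexc; auto).
  apply (maxl_spec _ (in_nonnil _ _ Hin)); auto.
Qed.

Lemma Mexc_attained n m a : (2 <= n)%nat -> exists b, (b < n)%nat /\ b <> a /\ Mexc n m a = m b.
Proof.
  intros Hn. unfold Mexc. fold (Lexc n a).
  assert (Hb : exists b, (b < n)%nat /\ b <> a).
  { destruct (Nat.eq_dec a 0); [exists 1%nat|exists 0%nat]; lia. }
  destruct Hb as [b [Hb1 Hb2]].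
  assert (Hin : In (m b) (map m (Lexc n a))) by (apply in_map, in_Lexc; auto).
  destruct (maxl_spec _ (in_nonnil _ _ Hin)) as [H1 _].
  apply in_map_iff in H1. destruct H1 as [c [Hc1 Hc2]]. apply in_Lexc in Hc2.
  exists c. intuition.
Qed.

Lemma Mexc_le n m a B : (2 <= n)%nat -> (forall b, (b < n)%nat -> b <> a -> m b <= B) -> Mexc n m a <= B.
Proof.
  intros Hn H. destruct (Mexc_attained n m a Hn) as [b [H1 [H2 ->]]]. auto.
Qed.

Lemma Mexc_char n m a b : (2 <= n)%nat -> (b < n)%nat -> b <> a ->
  (forall c, (c < n)%nat -> c <> a -> m c <= m b) -> Mexc n m a = m b.
Proof.
  intros Hn Hb Hba H. apply Rle_antisym; [apply Mexc_le; auto|apply Mexc_ge; auto].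
Qed.

Definition Pairs n := filter (fun p : nat * nat => negb (Nat.eqb (fst p) (snd p)))
                  (list_prod (seq 0 n) (seq 0 n)).

Lemma in_Pairs n i j : In (i, j) (Pairs n) <-> (i < n)%nat /\ (j < n)%nat /\ i <> j.
Proof.
  unfold Pairs. rewrite filter_In, in_prod_iff, !in_seq0. simpl.
  destruct (Nat.eqb_spec i j); simpl; intuition.
Qed.

Lemma minpair_le n nu m i j : (i < n)%nat -> (j < n)%nat -> i <> j ->
  minpair n nu m <= m i - nu * m j.
Proof.
  intros Hi Hj Hij. unfold minpair. fold (Pairs n).
  assert (Hin : In (m i - nu * m j) (map (fun p : nat * nat => m (fst p) - nu * m (snd p)) (Pairs n))).
  { change (m i - nu * m j) with ((fun p : nat * nat => m (fst p) - nu * m (snd p)) (i, j)).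
    apply in_map, in_Pairs; auto. }
  apply (minl_spec _ (in_nonnil _ _ Hin)); auto.
Qed.

Lemma minpair_attained n nu m : (2 <= n)%nat -> exists i j, (i < n)%nat /\ (j < n)%nat /\ i <> j /\
  minpair n nu m = m i - nu * m j.
Proof.
  intros Hn. unfold minpair. fold (Pairs n).
  assert (Hin : In (m 0%nat - nu * m 1%nat) (map (fun p : nat * nat => m (fst p) - nu * m (snd p)) (Pairs n))).
  { change (m 0%nat - nu * m 1%nat) with ((fun p : nat * nat => m (fst p) - nu * m (snd p)) (0%nat, 1%nat)).
    apply in_map, in_Pairs; lia. }
  destruct (minl_spec _ (in_nonnil _ _ Hin)) as [H1 _].
  apply in_map_iff in H1. destruct H1 as [[i j] [H1 H2]]. apply in_Pairs in H2.
  exists i, j. simpl in H1. intuition.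
Qed.

Lemma cont_plus (f g : R -> R) x : continuous f x -> continuous g x -> continuous (fun y => f y + g y) x.
Proof. intros H1 H2. exact (continuous_plus f g x H1 H2). Qed.
Lemma cont_mult (f g : R -> R) x : continuous f x -> continuous g x -> continuous (fun y => f y * g y) x.
Proof. intros H1 H2. exact (continuous_mult f g x H1 H2). Qed.
Lemma cont_opp (f : R -> R) x : continuous f x -> continuous (fun y => - f y) x.
Proof. intros H1. exact (continuous_opp f x H1). Qed.
Lemma cont_abs (f : R -> R) x : continuous f x -> continuous (fun y => Rabs (f y)) x.
Proof. intros H1. exact (continuous_Rabs_comp f x H1). Qed.
Lemma cont_exp (f : R -> R) x : continuous f x -> continuous (fun y => exp (f y)) x.
Proof.
  intros H. apply (@continuous_comp R_UniformSpace R_UniformSpace R_UniformSpace f exp x H).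
  apply (@ex_derive_continuous R_AbsRing R_NormedModule). auto_derive; auto.
Qed.

Lemma Rmax_abs a b : Rmax a b = (a + b + Rabs (a - b)) / 2.
Proof. unfold Rmax, Rabs. destruct (Rle_dec a b), (Rcase_abs (a - b)); lra. Qed.
Lemma Rmin_abs a b : Rmin a b = (a + b - Rabs (a - b)) / 2.
Proof. unfold Rmin, Rabs. destruct (Rle_dec a b), (Rcase_abs (a - b)); lra. Qed.

Lemma cont_Rmax (f g : R -> R) x : continuous f x -> continuous g x -> continuous (fun y => Rmax (f y) (g y)) x.
Proof.
  intros H1 H2. apply continuous_ext with (f := fun y => (f y + g y + Rabs (f y + - g y)) * / 2).
  { intros y. rewrite Rmax_abs. unfold Rdiv, Rminus. change (@eq R ((f y + g y + Rabs (f y + - g y)) * / 2) ((f y + g y + Rabs (f y + - g y)) * / 2)). reflexivity. }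
  apply cont_mult; [|apply continuous_const].
  apply cont_plus; [apply cont_plus; auto|]. apply cont_abs, cont_plus; auto. apply cont_opp; auto.
Qed.

Lemma cont_Rmin (f g : R -> R) x : continuous f x -> continuous g x -> continuous (fun y => Rmin (f y) (g y)) x.
Proof.
  intros H1 H2. apply continuous_ext with (f := fun y => (f y + g y + - Rabs (f y + - g y)) * / 2).
  { intros y. rewrite Rmin_abs. unfold Rdiv, Rminus. change (@eq R ((f y + g y + - Rabs (f y + - g y)) * / 2) ((f y + g y + - Rabs (f y + - g y)) * / 2)). reflexivity. }
  apply cont_mult; [|apply continuous_const].
  apply cont_plus; [apply cont_plus; auto|]. apply cont_opp, cont_abs, cont_plus; auto. apply cont_opp; auto.
Qed.

Lemma ex_RInt_cont (f : R -> R) : (forall x, continuous f x) -> forall a b, ex_RInt f a b.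
Proof. intros H a b. apply (@ex_RInt_continuous R_CompleteNormedModule). intros; apply H. Qed.

Lemma RInt_piece (f f1 f2 F1 F2 : R -> R) y0 T :
  (forall x, continuous f x) -> 0 <= y0 <= T ->
  (forall y, 0 < y < y0 -> f y = f1 y) -> (forall y, y0 < y < T -> f y = f2 y) ->
  (forall y, 0 <= y <= y0 -> is_derive F1 y (f1 y) /\ continuous f1 y) ->
  (forall y, y0 <= y <= T -> is_derive F2 y (f2 y) /\ continuous f2 y) ->
  RInt f 0 T = (F1 y0 - F1 0) + (F2 T - F2 y0).
Proof.
  intros Hc Hy H1 H2 D1 D2. apply is_RInt_unique.
  apply (is_RInt_Chasles f 0 y0 T).
  - apply (is_RInt_ext f1). { intros x Hx. rewrite Rmin_left, Rmax_right in Hx by lra. symmetry; apply H1; lra. }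
    apply (is_RInt_derive F1 f1); rewrite Rmin_left, Rmax_right by lra; intros; apply D1; lra.
  - apply (is_RInt_ext f2). { intros x Hx. rewrite Rmin_left, Rmax_right in Hx by lra. symmetry; apply H2; lra. }
    apply (is_RInt_derive F2 f2); rewrite Rmin_left, Rmax_right by lra; intros; apply D2; lra.
Qed.

Ltac toR := match goal with |- @eq _ ?a ?b => change (@eq R a b) end.

Section Nu.
Variable nu : R.
Hypothesis Hnu : 0 < nu < 1.

Lemma ln_nu_neg : ln nu < 0.
Proof. rewrite <- ln_1. apply ln_increasing; lra. Qed.

Lemma exp_ln_nu : exp (ln nu) = nu.
Proof. apply exp_ln; lra. Qed.

Lemma hnu_alt : hnu nu = (1 - nu) * exp (nu / (1 - nu) * ln nu).
Proof.
  unfold hnu. replace (ln nu / (1 - nu)) with (nu / (1 - nu) * ln nu + ln nu) by (field; lra).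
  rewrite exp_plus, exp_ln_nu. ring.
Qed.

Lemma hnu_pos : 0 < hnu nu.
Proof. rewrite hnu_alt. apply Rmult_lt_0_compat; [lra|apply exp_pos]. Qed.

Lemma gnu_pos : 0 < gnu nu.
Proof.
  unfold gnu. apply Rmult_lt_0_compat; [apply exp_pos|].
  pose proof ln_nu_neg. assert (0 < 1 / (1 + nu)) by (apply Rdiv_lt_0_compat; lra).
  assert (ln nu / (1 - nu) < 0). { unfold Rdiv. apply Rmult_neg_pos; [lra|]. apply Rinv_0_lt_compat; lra. }
  lra.
Qed.

Lemma exp_J_mul ma y : exp (ma + J nu y) * exp (- y) = exp ma * nu * exp (- nu * y).
Proof.
  rewrite <- exp_plus. unfold J.
  replace (ma + ((1 - nu) * y + ln nu) + - y) with (ma + ln nu + - nu * y) by ring.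
  rewrite !exp_plus, exp_ln_nu. ring.
Qed.

Lemma J_cont ma x : continuous (fun y => exp (ma + J nu y)) x.
Proof. apply (@ex_derive_continuous R_AbsRing R_NormedModule). unfold J. auto_derive; auto. Qed.

Lemma expneg_cont c x : continuous (fun y => exp (c * y)) x.
Proof. apply (@ex_derive_continuous R_AbsRing R_NormedModule). auto_derive; auto. Qed.

Lemma expm_cont x : continuous (fun y => exp (- y)) x.
Proof. apply (@ex_derive_continuous R_AbsRing R_NormedModule). auto_derive; auto. Qed.

Definition xi' (M ma : R) : R :=
  if Rlt_dec (M - ma) (ln nu) then exp ma
  else exp M + hnu nu * exp ((ma - nu * M) / (1 - nu)).

Lemma xi_int M ma : is_int0inf (fun y => Rmax (exp M) (exp (ma + J nu y)) * exp (- y)) (xi' M ma).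
Proof.
  set (f := fun y => Rmax (exp M) (exp (ma + J nu y)) * exp (- y)).
  assert (Hc : forall x, continuous f x).
  { intros x. unfold f. apply cont_mult; [apply cont_Rmax; [apply continuous_const|apply J_cont]|].
    apply expm_cont. }
  assert (Hex := ex_RInt_cont f Hc).
  set (f2 := fun y => exp ma * nu * exp (- nu * y)).
  set (F2 := fun y => - exp ma * exp (- nu * y)).
  assert (D2 : forall y, is_derive F2 y (f2 y) /\ continuous f2 y).
  { intros y. split.
    - unfold F2, f2. auto_derive; auto. ring.
    - unfold f2. apply cont_mult; [apply continuous_const|]. apply expneg_cont. }
  unfold xi'. destruct (Rlt_dec (M - ma) (ln nu)) as [Hlt|Hge].
  - apply (int0_tail f (exp ma) (exp ma) nu 0); auto; [lra|].
    intros T HT. rewrite (RInt_piece f f2 f2 F2 F2 0 T); auto; try lra.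
    + toR. unfold F2. rewrite Rmult_0_r, exp_0. ring.
    + intros y Hy; lra.
    + intros y Hy. unfold f, f2. rewrite Rmax_right; [apply exp_J_mul|].
      left. apply exp_increasing. unfold J. pose proof (Rmult_le_pos (1-nu) y ltac:(lra) ltac:(lra)). lra.
  - set (y0 := (M - ma - ln nu) / (1 - nu)).
    assert (Hy0 : 0 <= y0). { unfold y0. apply Rnot_lt_le in Hge. apply Rdiv_le_0_compat; lra. }
    assert (HJ : forall y, ma + J nu y - M = (1 - nu) * (y - y0)).
    { intros y. unfold J, y0. field. lra. }
    set (f1 := fun y => exp M * exp (- y)).
    set (F1 := fun y => - exp M * exp (- y)).
    assert (Hid : exp M + hnu nu * exp ((ma - nu*M)/(1-nu)) = exp M - exp M * exp (-y0) + exp ma * exp (-nu*y0)).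
    { unfold hnu. rewrite Rmult_minus_distr_r, <- !exp_plus.
      replace (nu / (1 - nu) * ln nu + (ma - nu * M) / (1 - nu)) with (ma + - nu * y0) by (unfold y0; field; lra).
      replace (ln nu / (1 - nu) + (ma - nu * M) / (1 - nu)) with (M + - y0) by (unfold y0; field; lra).
      ring. }
    rewrite Hid.
    apply (int0_tail f (exp M - exp M * exp (- y0) + exp ma * exp (- nu * y0)) (exp ma) nu y0); auto; [lra|].
    + intros T HT. rewrite (RInt_piece f f1 f2 F1 F2 y0 T); auto; try lra.
      * toR. unfold F1, F2. rewrite Ropp_0, exp_0. ring.
      * intros y Hy. unfold f, f1. rewrite Rmax_left; auto. left. apply exp_increasing.
        pose proof (HJ y). pose proof (Rmult_lt_compat_l (1 - nu) (y - y0) 0 ltac:(lra) ltac:(lra)). lra.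
      * intros y Hy. unfold f, f2. rewrite Rmax_right; [apply exp_J_mul|].
        left. apply exp_increasing.
        pose proof (HJ y). pose proof (Rmult_lt_compat_l (1 - nu) 0 (y - y0) ltac:(lra) ltac:(lra)). lra.
      * intros y _. split.
        -- unfold F1, f1. auto_derive; auto. ring.
        -- unfold f1. apply cont_mult; [apply continuous_const|].
           apply expm_cont.
Qed.

Definition phi (y : R) := exp (Rmin (J nu y) (- nu * J nu y) / (1 - nu)).

Lemma g_int : is_int0inf (fun y => phi y * exp (- y)) (gnu nu).
Proof.
  set (f := fun y => phi y * exp (- y)).
  assert (Hc : forall x, continuous f x).
  { intros x. unfold f, phi. apply cont_mult; [|apply expm_cont].
    apply (@continuous_comp R_UniformSpace R_UniformSpace R_UniformSpace (fun y => Rmin (J nu y) (- nu * J nu y)) (fun z => exp (z / (1 - nu)))).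
    - apply cont_Rmin; apply (@ex_derive_continuous R_AbsRing R_NormedModule); unfold J; auto_derive; auto.
    - apply (@ex_derive_continuous R_AbsRing R_NormedModule). auto_derive; auto. }
  assert (Hex := ex_RInt_cont f Hc).
  pose proof ln_nu_neg as Hln.
  set (y0 := - ln nu / (1 - nu)).
  assert (Hy0 : 0 < y0). { unfold y0. apply Rdiv_lt_0_compat; lra. }
  assert (HJ : forall y, J nu y = (1 - nu) * (y - y0)). { intros y. unfold J, y0. field. lra. }
  set (K1 := exp (ln nu / (1 - nu))).
  set (K2 := exp (- nu * ln nu / (1 - nu))).
  set (f1 := fun _ : R => K1).
  set (F1 := fun y : R => K1 * y).
  set (f2 := fun y => K2 * exp (- (1 + nu) * y)).
  set (F2 := fun y => - K2 / (1 + nu) * exp (- (1 + nu) * y)).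
  assert (Hid : gnu nu = K1 * y0 + K2 / (1 + nu) * exp (- (1 + nu) * y0)).
  { assert (HK : K2 * exp (- (1 + nu) * y0) = K1).
    { unfold K1, K2. rewrite <- exp_plus. f_equal. unfold y0. field. lra. }
    replace (K2 / (1 + nu) * exp (- (1 + nu) * y0)) with (K2 * exp (- (1 + nu) * y0) / (1 + nu)) by (field; lra).
    rewrite HK. unfold gnu. fold K1. unfold y0. field. lra. }
  rewrite Hid.
  apply (int0_tail f (K1 * y0 + K2 / (1 + nu) * exp (- (1 + nu) * y0)) (K2 / (1 + nu)) (1 + nu) y0); auto; [lra|].
  intros T HT. rewrite (RInt_piece f f1 f2 F1 F2 y0 T); auto; try lra.
  - toR. unfold F1, F2. field. lra.
  - intros y Hy. unfold f, f1, phi. pose proof (HJ y) as HJy.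
    assert (Hneg : J nu y < 0).
    { rewrite HJy. pose proof (Rmult_lt_compat_l (1 - nu) (y - y0) 0 ltac:(lra) ltac:(lra)). lra. }
    rewrite Rmin_left by (pose proof (Rmult_le_pos nu (- J nu y) ltac:(lra) ltac:(lra)); lra).
    unfold K1. rewrite <- exp_plus. f_equal. unfold J. field. lra.
  - intros y Hy. unfold f, f2, phi. pose proof (HJ y) as HJy.
    assert (Hpos : J nu y > 0).
    { rewrite HJy. pose proof (Rmult_lt_compat_l (1 - nu) 0 (y - y0) ltac:(lra) ltac:(lra)). lra. }
    rewrite Rmin_right by (pose proof (Rmult_le_pos nu (J nu y) ltac:(lra) ltac:(lra)); lra).
    unfold K2. rewrite <- !exp_plus. f_equal. unfold J. field. lra.
  - intros y _. split.
    + unfold F1, f1. auto_derive; auto. ring.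
    + apply continuous_const.
  - intros y _. split.
    + unfold F2, f2. auto_derive; auto. field. lra.
    + unfold f2. apply cont_mult; [apply continuous_const|]. apply expneg_cont.
Qed.
End Nu.

Lemma mono_deriv (f df : R -> R) a b : a <= b -> (forall x, is_derive f x (df x)) ->
  (forall x, a <= x <= b -> 0 <= df x) -> f a <= f b.
Proof.
  intros Hab Hd Hp.
  destruct (MVT_gen f a b df) as [c [Hc Heq]].
  - intros x _. apply Hd.
  - intros x _. apply continuity_pt_filterlim. apply (@ex_derive_continuous R_AbsRing R_NormedModule).
    exists (df x). apply Hd.
  - rewrite Rmin_left, Rmax_right in Hc by lra.
    pose proof (Rmult_le_pos (df c) (b - a) (Hp c Hc) ltac:(lra)). lra.
Qed.

Lemma exp_le a b : a <= b -> exp a <= exp b.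
Proof. intros [H|H]; [left; apply exp_increasing; auto|rewrite H; lra]. Qed.

Section Nu2.
Variable nu : R.
Hypothesis Hnu : 0 < nu < 1.

Let be := 1 / (1 - nu).
Let ga := nu / (1 - nu).
Let h := hnu nu.

Definition kf s := be * exp (ga * s) + ga * exp (- be * s).
Definition psi s := exp s - 1 - h * (exp (be * s) - exp (- ga * s)).

Lemma kf_mono s t : 0 <= s <= t -> kf s <= kf t.
Proof.
  intros Hst. apply (mono_deriv kf (fun x => be * ga * exp (ga * x) - ga * be * exp (- be * x))); [lra| |].
  - intros x. unfold kf. auto_derive; auto. ring.
  - intros x Hx. assert (0 < be) by (unfold be; apply Rdiv_lt_0_compat; lra).
    assert (0 < ga) by (unfold ga; apply Rdiv_lt_0_compat; lra).
    assert (exp (- be * x) <= exp (ga * x)).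
    { apply exp_le. pose proof (Rmult_le_pos be x ltac:(lra) ltac:(lra)).
      pose proof (Rmult_le_pos ga x ltac:(lra) ltac:(lra)). lra. }
    assert (0 < be * ga) by (apply Rmult_lt_0_compat; lra).
    pose proof (Rmult_le_compat_l (be * ga) _ _ ltac:(lra) H1). lra.
Qed.

Lemma dpsi s : is_derive psi s (exp s * (1 - h * kf s)).
Proof.
  unfold psi, kf. auto_derive; auto.
  assert (be = 1 + ga) by (unfold be, ga; field; lra).
  replace (be * s) with (s + ga * s) by (rewrite H; ring).
  replace (- ga * s) with (s + - be * s) by (rewrite H; ring).
  rewrite !exp_plus. rewrite H. ring.
Qed.

Lemma psi_lam : 0 <= psi (- ln nu).
Proof.
  unfold psi. pose proof (exp_ln_nu nu Hnu) as Hl.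
  set (P := exp (nu / (1 - nu) * ln nu)).
  assert (h = (1 - nu) * P) by (unfold h; apply hnu_alt; auto).
  assert (exp (- ln nu) = / nu) by (rewrite exp_Ropp, Hl; auto).
  assert (exp (- ga * - ln nu) = P) by (unfold P, ga; f_equal; ring).
  assert (exp (be * - ln nu) = / (nu * P)).
  { replace (be * - ln nu) with (- (ln nu + nu / (1 - nu) * ln nu)) by (unfold be; field; lra).
    rewrite exp_Ropp, exp_plus, Hl. auto. }
  rewrite H, H0, H1, H2.
  assert (0 < P) by apply exp_pos.
  replace (/ nu - 1 - (1 - nu) * P * (/ (nu * P) - P)) with ((1 - nu) * (P * P)) by (field; lra).
  apply Rmult_le_pos; [lra|]. nra.
Qed.

Lemma psi_nonneg d : 0 <= d <= - ln nu -> 0 <= psi d.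
Proof.
  intros Hd.
  assert (Hp0 : psi 0 = 0). { unfold psi. rewrite !Rmult_0_r, exp_0. ring. }
  destruct (Rle_dec 0 (1 - h * kf d)) as [Hr|Hr].
  - rewrite <- Hp0. apply (mono_deriv psi (fun s => exp s * (1 - h * kf s))); [lra|apply dpsi|].
    intros x Hx. apply Rmult_le_pos; [left; apply exp_pos|].
    assert (kf x <= kf d) by (apply kf_mono; lra).
    assert (0 < h) by (unfold h; apply hnu_pos; auto).
    pose proof (Rmult_le_compat_l h _ _ ltac:(lra) H). lra.
  - apply Rle_trans with (psi (- ln nu)); [apply psi_lam|].
    assert (Hm : forall s, - ((fun s => exp s * (1 - h * kf s)) s) = exp s * (h * kf s - 1)) by (intros; ring).
    pose proof (mono_deriv (fun s => - psi s) (fun s => - (exp s * (1 - h * kf s))) d (- ln nu) ltac:(lra)).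
    cut (- psi d <= - psi (- ln nu)); [lra|]. apply H.
    + intros x. apply (is_derive_opp psi). apply dpsi.
    + intros x Hx. rewrite Hm. apply Rmult_le_pos; [left; apply exp_pos|].
      assert (kf d <= kf x) by (apply kf_mono; lra).
      assert (0 < h) by (unfold h; apply hnu_pos; auto).
      pose proof (Rmult_le_compat_l h _ _ ltac:(lra) H0). lra.
Qed.

Lemma xi_order m1 m2 : m2 <= m1 -> ln nu <= m2 - m1 ->
  exp m2 + hnu nu * exp ((m1 - nu * m2) / (1 - nu)) <= exp m1 + hnu nu * exp ((m2 - nu * m1) / (1 - nu)).
Proof.
  intros H1 H2. pose proof (psi_nonneg (m1 - m2) ltac:(lra)) as Hp. unfold psi in Hp.
  apply Rmult_le_compat_l with (r := exp m2) in Hp; [|left; apply exp_pos].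
  fold h.
  replace (exp m1) with (exp m2 * exp (m1 - m2)) by (rewrite <- exp_plus; f_equal; ring).
  replace (exp ((m1 - nu * m2) / (1 - nu))) with (exp m2 * exp (be * (m1 - m2))) by (rewrite <- exp_plus; f_equal; unfold be; field; lra).
  replace (exp ((m2 - nu * m1) / (1 - nu))) with (exp m2 * exp (- ga * (m1 - m2))) by (rewrite <- exp_plus; f_equal; unfold ga; field; lra).
  nra.
Qed.
End Nu2.

Lemma cont_of_bound (F : R -> R) c x : 0 <= c -> (forall y, 0 <= F y) ->
  (forall y y', F y' <= exp (c * Rabs (y' - y)) * F y) -> continuous F x.
Proof.
  intros Hc Hp Hb. apply continuity_pt_filterlim.
  intros eps Heps.
  set (e := eps / (F x + 1)).
  assert (He : 0 < e) by (unfold e; apply Rdiv_lt_0_compat; [lra|pose proof (Hp x); lra]).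
  set (d := ln (1 + e) / (c + 1)).
  assert (Hl : 0 < ln (1 + e)) by (rewrite <- ln_1; apply ln_increasing; lra).
  assert (Hd : 0 < d) by (unfold d; apply Rdiv_lt_0_compat; lra).
  exists d. split; [auto|]. intros y [_ Hy]. simpl in Hy. unfold R_dist in Hy.
  set (q := exp (c * Rabs (y - x))).
  assert (Hq1 : 1 <= q).
  { unfold q. rewrite <- exp_0. apply exp_le. apply Rmult_le_pos; auto. apply Rabs_pos. }
  assert (Hq2 : q < 1 + e).
  { unfold q. rewrite <- (exp_ln (1 + e)) by lra. apply exp_increasing.
    apply Rle_lt_trans with ((c + 1) * Rabs (y - x)).
    { pose proof (Rabs_pos (y - x)). nra. }
    replace (ln (1 + e)) with ((c + 1) * d) by (unfold d; field; lra).
    apply Rmult_lt_compat_l; lra. }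
  assert (H1 : F y <= q * F x) by (apply Hb).
  assert (H2 : F x <= q * F y) by (unfold q; rewrite Rabs_minus_sym; apply Hb).
  pose proof (Hp x). pose proof (Hp y).
  assert (Fx_e : F x * e < eps).
  { unfold e. apply Rlt_le_trans with ((F x + 1) * (eps / (F x + 1))).
    - apply Rmult_lt_compat_r; [apply Rdiv_lt_0_compat; lra|lra].
    - right; field; lra. }
  apply Rabs_def1.
  - assert (F y - F x <= (q - 1) * F x) by lra.
    assert ((q - 1) * F x <= e * F x) by (apply Rmult_le_compat_r; lra). lra.
  -
    assert (F x - F y <= (q - 1) * F y) by lra.
    assert ((q - 1) * F y <= (q - 1) * (q * F x)) by (apply Rmult_le_compat_l; lra).
    assert (F x - F y <= (q - 1) * F x).
    { (* F y >= F x / q >= F x (2 - q) *)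
      assert (q * F y >= F x) by lra.
      assert (F x * (2 - q) <= F y).
      { assert ((2 - q) * q <= 1) by nra.
        destruct (Rle_dec 0 (2 - q)).
        - apply Rle_trans with ((2 - q) * (q * F y)); [nra|]. nra.
        - nra. }
      nra. }
    assert ((q - 1) * F x <= e * F x) by (apply Rmult_le_compat_r; lra). lra.
Qed.

Fixpoint Pg (g : R) (j : nat) : R := match j with O => 0 | S j => 1 + g * Pg g j end.

Lemma fold_scal g (l : list nat) : fold_right Rplus 0 (map (fun i => g * g ^ i) l) = g * fold_right Rplus 0 (map (fun i => g ^ i) l).
Proof. induction l; simpl; [ring|rewrite IHl; ring]. Qed.

Lemma geomsum_S g j : geomsum g (S j) = g + g * geomsum g j.
Proof.
  unfold geomsum. simpl. rewrite Rmult_1_r. f_equal.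
  rewrite <- seq_shift, map_map. simpl. apply fold_scal.
Qed.

Lemma geomsum_Pg g j : geomsum g j = g * Pg g j.
Proof.
  induction j; [unfold geomsum; simpl; ring|]. rewrite geomsum_S, IHj. simpl. ring.
Qed.

Lemma Pg_nonneg g j : 0 <= g -> 0 <= Pg g j.
Proof. intros Hg; induction j; simpl; [lra|]. pose proof (Rmult_le_pos _ _ Hg IHj). lra. Qed.

Lemma RInt_scalR (f : R -> R) a b c : ex_RInt f a b -> RInt (fun y => c * f y) a b = c * RInt f a b.
Proof. intros H. exact (RInt_scal f a b c H). Qed.

Section Main.
Variable n : nat.
Variable nu : R.
Hypothesis Hn : (2 <= n)%nat.
Hypothesis Hnu : 0 < nu < 1.

Definition Em (m : nat -> R) := maxI n (fun b => exp (m b)).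
Definition Wf j m := Vrev n nu j m * sumexp n m.
Definition Qf j m a := int0inf (fun y => Wf j (shift m a (J nu y)) * exp (- y)).
Definition cm m := exp (minpair n nu m / (1 - nu)).
Definition le_n (m m' : nat -> R) := forall x, (x < n)%nat -> m x <= m' x.
Definition addc (m : nat -> R) t := fun x => m x + t.

Lemma n1 : (1 <= n)%nat. Proof. lia. Qed.

Lemma Sig_pos m : 0 < sumexp n m.
Proof. apply sumexp_pos, n1. Qed.

Lemma Em_pos m : 0 < Em m.
Proof. apply Rlt_le_trans with (exp (m 0%nat)); [apply exp_pos|apply (maxI_ge n (fun b => exp (m b))); lia]. Qed.

Lemma Em_shift m a t : (a < n)%nat -> Em (shift m a t) = Rmax (exp (Mexc n m a)) (exp (m a + t)).
Proof.
  intros Ha. unfold Em. apply Rle_antisym.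
  - apply maxI_le; [apply n1|]. intros b Hb. unfold shift, delta.
    destruct (Nat.eqb_spec b a) as [->|Hne].
    + rewrite Rmult_1_r. apply Rmax_r.
    + rewrite Rmult_0_r, Rplus_0_r. eapply Rle_trans; [|apply Rmax_l]. apply exp_le. apply Mexc_ge; auto.
  - apply Rmax_lub.
    + destruct (Mexc_attained n m a Hn) as [b [Hb [Hba ->]]].
      eapply Rle_trans; [|apply (maxI_ge n (fun b0 => exp (shift m a t b0)) b Hb)].
      unfold shift, delta. destruct (Nat.eqb_spec b a); [lia|]. rewrite Rmult_0_r, Rplus_0_r. lra.
    + eapply Rle_trans; [|apply (maxI_ge n (fun b0 => exp (shift m a t b0)) a Ha)].
      unfold shift, delta. rewrite Nat.eqb_refl, Rmult_1_r. lra.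
Qed.

Lemma dens_id j m a y : (a < n)%nat ->
  Vrev n nu j (shift m a (J nu y)) * dens n nu m a y = / sumexp n m * (Wf j (shift m a (J nu y)) * exp (- y)).
Proof.
  intros Ha. unfold Wf. rewrite sumexp_shift by auto.
  unfold dens, pa. pose proof (Sig_pos m).
  assert (Hx : exp (m a + J nu y) * exp (- y) = exp (m a) * nu * exp (- nu * y)) by (apply exp_J_mul; auto).
  set (V := Vrev n nu j (shift m a (J nu y))).
  transitivity (/ sumexp n m * V * ((sumexp n m - exp (m a)) * exp (- y) + exp (m a + J nu y) * exp (- y))).
  - rewrite Hx. field. lra.
  - ring.
Qed.

Lemma xi_unfold a m : xi n nu a m = xi' nu (Mexc n m a) (m a).
Proof. reflexivity. Qed.

Lemma xi_int_m m a : (a < n)%nat ->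
  is_int0inf (fun y => Em (shift m a (J nu y)) * exp (- y)) (xi n nu a m).
Proof.
  intros Ha. rewrite xi_unfold.
  assert (Heq : (fun y => Em (shift m a (J nu y)) * exp (- y)) =
                (fun y => Rmax (exp (Mexc n m a)) (exp (m a + J nu y)) * exp (- y))).
  { apply functional_extensionality. intros y. rewrite Em_shift; auto. }
  rewrite Heq. apply xi_int; auto.
Qed.

Lemma exists_x12 m : exists x1 x2, (x1 < n)%nat /\ (x2 < n)%nat /\ x1 <> x2 /\
  (forall y, (y < n)%nat -> m y <= m x1) /\ (forall y, (y < n)%nat -> y <> x1 -> m y <= m x2).
Proof.
  destruct (maxI_attained n m n1) as [x1 [Hx1 Hm]].
  destruct (Mexc_attained n m x1 Hn) as [x2 [Hx2 [H21 Hm2]]].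
  exists x1, x2. refine (conj Hx1 (conj Hx2 (conj (fun e => H21 (eq_sym e)) (conj _ _)))).
  - intros y Hy. rewrite <- Hm. apply (maxI_ge n m y Hy).
  - intros y Hy Hyx. rewrite <- Hm2. apply Mexc_ge; auto.
Qed.

Section X12.
Variables (m : nat -> R) (x1 x2 : nat).
Hypotheses (Hx1 : (x1 < n)%nat) (Hx2 : (x2 < n)%nat) (H12 : x1 <> x2)
  (Hm1 : forall y, (y < n)%nat -> m y <= m x1) (Hm2 : forall y, (y < n)%nat -> y <> x1 -> m y <= m x2).

Lemma Em_x1 : Em m = exp (m x1).
Proof. unfold Em. apply (maxI_at n (fun b => exp (m b))); auto. intros a Ha. apply exp_le; auto. Qed.

Lemma Mexc_x1 : Mexc n m x1 = m x2.
Proof. apply Mexc_char; auto. Qed.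

Lemma Mexc_other a : (a < n)%nat -> a <> x1 -> Mexc n m a = m x1.
Proof. intros Ha Hax. apply Mexc_char; auto. Qed.

Lemma xi_other a : (a < n)%nat -> a <> x1 ->
  xi n nu a m = exp (m x1) + hnu nu * exp ((m a - nu * m x1) / (1 - nu)).
Proof.
  intros Ha Hax. rewrite xi_unfold. unfold xi'. rewrite Mexc_other by auto.
  pose proof (ln_nu_neg nu Hnu). pose proof (Hm1 a Ha).
  destruct (Rlt_dec (m x1 - m a) (ln nu)); [lra|auto].
Qed.

Lemma xi_x2 : xi n nu x2 m = exp (m x1) + hnu nu * exp ((m x2 - nu * m x1) / (1 - nu)).
Proof. apply xi_other; auto. Qed.

Lemma xi_ord a : (a < n)%nat -> xi n nu a m <= xi n nu x2 m.
Proof.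
  intros Ha. rewrite xi_x2. pose proof (hnu_pos nu Hnu).
  destruct (Nat.eq_dec a x1) as [->|Hax].
  - rewrite xi_unfold. unfold xi'. rewrite Mexc_x1.
    destruct (Rlt_dec (m x2 - m x1) (ln nu)).
    + pose proof (exp_pos ((m x2 - nu * m x1) / (1 - nu))). nra.
    + apply xi_order; auto. apply Rnot_lt_le; auto.
  - rewrite xi_other by auto. apply Rplus_le_compat_l. apply Rmult_le_compat_l; [lra|].
    apply exp_le. unfold Rdiv. apply Rmult_le_compat_r; [left; apply Rinv_0_lt_compat; lra|].
    assert (m a <= m x2) by (destruct (Nat.eq_dec a x2) as [->|]; [lra|auto]). lra.
Qed.

Lemma xi_x2_up : xi n nu x2 m <= (1 + hnu nu) * Em m.
Proof.
  rewrite xi_x2, Em_x1. pose proof (hnu_pos nu Hnu).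
  assert (exp ((m x2 - nu * m x1) / (1 - nu)) <= exp (m x1)).
  { apply exp_le. apply Rmult_le_reg_r with (1 - nu); [lra|]. unfold Rdiv.
    rewrite Rmult_assoc, Rinv_l, Rmult_1_r by lra. pose proof (Hm1 x2 Hx2). nra. }
  nra.
Qed.

Lemma xi_x2_low : Em m + hnu nu * cm m <= xi n nu x2 m.
Proof.
  rewrite xi_x2, Em_x1. apply Rplus_le_compat_l. apply Rmult_le_compat_l; [left; apply hnu_pos; auto|].
  unfold cm. apply exp_le. unfold Rdiv. apply Rmult_le_compat_r; [left; apply Rinv_0_lt_compat; lra|].
  apply minpair_le; auto.
Qed.
End X12.

Lemma xi_up a m : (a < n)%nat -> xi n nu a m <= (1 + hnu nu) * Em m.
Proof.
  intros Ha. destruct (exists_x12 m) as [x1 [x2 [H1 [H2 [H3 [H4 H5]]]]]].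
  eapply Rle_trans; [apply (xi_ord m x1 x2); auto|]. apply (xi_x2_up m x1 x2); auto.
Qed.

Lemma cm_shift m a t : (a < n)%nat -> cm m * exp (Rmin t (- nu * t) / (1 - nu)) <= cm (shift m a t).
Proof.
  intros Ha. unfold cm. rewrite <- exp_plus. apply exp_le.
  replace (minpair n nu m / (1 - nu) + Rmin t (- nu * t) / (1 - nu)) with
          ((minpair n nu m + Rmin t (- nu * t)) / (1 - nu)) by (field; lra).
  unfold Rdiv. apply Rmult_le_compat_r; [left; apply Rinv_0_lt_compat; lra|].
  destruct (minpair_attained n nu (shift m a t) Hn) as [i [j [Hi [Hj [Hij ->]]]]].
  pose proof (minpair_le n nu m i j Hi Hj Hij).
  assert (Rmin t (- nu * t) <= 0).
  { destruct (Rle_dec 0 t). - apply Rle_trans with (- nu * t); [apply Rmin_r|nra].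
    - apply Rle_trans with t; [apply Rmin_l|lra]. }
  unfold shift, delta. destruct (Nat.eqb_spec i a), (Nat.eqb_spec j a); try lia.
  - pose proof (Rmin_l t (- nu * t)). lra.
  - pose proof (Rmin_r t (- nu * t)). lra.
  - lra.
Qed.


Definition IND j := (forall m m', le_n m m' -> Wf j m <= Wf j m') /\
  (forall m t, Wf j (addc m t) = exp t * Wf j m) /\
  (forall m, Em m + hnu nu * cm m * Pg (gnu nu) j <= Wf j m) /\
  (forall m, Wf j m <= (1 + hnu nu) ^ j * Em m).

Lemma Em_addc m t : Em (addc m t) = exp t * Em m.
Proof.
  unfold Em, addc. rewrite <- maxI_scal by (apply n1 || (left; apply exp_pos)).
  apply maxI_ext. intros a _. rewrite exp_plus. ring.
Qed.

Lemma W0 m : Wf 0 m = Em m.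
Proof.
  unfold Wf, Em. simpl. pose proof (Sig_pos m).
  rewrite (maxI_ext n (fun a => pa n m a) (fun a => / sumexp n m * exp (m a))).
  2:{ intros a _. unfold pa. field. lra. }
  rewrite maxI_scal by (apply n1 || (left; apply Rinv_0_lt_compat; lra)). field. lra.
Qed.

Lemma IND0 : IND 0.
Proof.
  unfold IND. repeat split.
  - intros m m' Hle. rewrite !W0. unfold Em. apply maxI_mono; [apply n1|]. intros a Ha. apply exp_le; auto.
  - intros m t. rewrite !W0. apply Em_addc.
  - intros m. rewrite W0. simpl. lra.
  - intros m. rewrite W0. simpl. lra.
Qed.

Lemma shift_le m m' a t : le_n m m' -> le_n (shift m a t) (shift m' a t).
Proof. intros H x Hx. unfold shift. specialize (H x Hx). lra. Qed.

Lemma shift_le_addc m a t t' : (a < n)%nat -> le_n (shift m a t') (addc (shift m a t) (Rabs (t' - t))).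
Proof.
  intros Ha x Hx. unfold shift, addc, delta. pose proof (Rabs_pos (t' - t)).
  destruct (Nat.eqb_spec x a).
  - rewrite !Rmult_1_r. pose proof (Rle_abs (t' - t)). lra.
  - rewrite !Rmult_0_r. lra.
Qed.

Lemma shift_addc m a s t : shift (addc m t) a s = addc (shift m a s) t.
Proof. apply functional_extensionality. intros x. unfold shift, addc. ring. Qed.

Section Step.
Variable j : nat.
Hypothesis HI : IND j.

Lemma W_nonneg m : 0 <= Wf j m.
Proof.
  destruct HI as [_ [_ [HL _]]]. specialize (HL m).
  pose proof (Em_pos m). pose proof (hnu_pos nu Hnu). assert (0 < cm m) by apply exp_pos.
  pose proof (Pg_nonneg (gnu nu) j (Rlt_le _ _ (gnu_pos nu Hnu))).
  assert (0 <= hnu nu * cm m * Pg (gnu nu) j) by (apply Rmult_le_pos; [apply Rmult_le_pos|]; lra).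
  lra.
Qed.

Lemma g_cont m a x : (a < n)%nat -> continuous (fun y => Wf j (shift m a (J nu y)) * exp (- y)) x.
Proof.
  intros Ha. apply cont_mult; [|apply expm_cont].
  apply (cont_of_bound _ (1 - nu)); [lra|intros; apply W_nonneg|].
  intros y y'. destruct HI as [HM [HH _]].
  rewrite <- HH. eapply Rle_trans; [apply HM, shift_le_addc; auto|].
  right. f_equal. f_equal. unfold J.
  replace ((1 - nu) * y' + ln nu - ((1 - nu) * y + ln nu)) with ((1 - nu) * (y' - y)) by ring.
  rewrite Rabs_mult, Rabs_pos_eq by lra. auto.
Qed.

Lemma g_exists m a : (a < n)%nat -> is_int0inf (fun y => Wf j (shift m a (J nu y)) * exp (- y)) (Qf j m a).
Proof.
  intros Ha. set (g := fun y => Wf j (shift m a (J nu y)) * exp (- y)).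
  assert (Hex : exists l, is_int0inf g l).
  { apply (int0_exists g ((1 + hnu nu) ^ j * xi n nu a m)).
    - apply ex_RInt_cont. intros x. apply g_cont; auto.
    - intros y _. unfold g. apply Rmult_le_pos; [apply W_nonneg|left; apply exp_pos].
    - intros T HT. pose proof (xi_int_m m a Ha) as HX.
      destruct (proj1 (is_int0inf_iff _ _) HX) as [HexE _].
      eapply Rle_trans with (RInt (fun y => (1 + hnu nu) ^ j * (Em (shift m a (J nu y)) * exp (- y))) 0 T).
      + apply RInt_le; auto.
        * apply ex_RInt_cont. intros x. apply g_cont; auto.
        * apply (ex_RInt_scal (fun y => Em (shift m a (J nu y)) * exp (- y)) 0 T ((1 + hnu nu) ^ j)); auto.
        * intros y _. unfold g. destruct HI as [_ [_ [_ HU]]].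
          rewrite <- Rmult_assoc. apply Rmult_le_compat_r; [left; apply exp_pos|]. apply HU.
      + rewrite (RInt_scalR (fun y => Em (shift m a (J nu y)) * exp (- y)) 0 T ((1 + hnu nu) ^ j)) by auto.
        apply Rmult_le_compat_l; [apply pow_le; pose proof (hnu_pos nu Hnu); lra|].
        apply (int0_partial_le _ _ HX); auto.
        intros y _. apply Rmult_le_pos; [left; apply Em_pos|left; apply exp_pos]. }
  unfold Qf. fold g. apply (epsilon_spec (inhabits 0) (is_int0inf g) Hex).
Qed.

Lemma Q_up m a : (a < n)%nat -> Qf j m a <= (1 + hnu nu) ^ j * xi n nu a m.
Proof.
  intros Ha. apply (is_int0inf_le _ _ _ _ (g_exists m a Ha) (is_int0inf_scal _ _ ((1 + hnu nu) ^ j) (xi_int_m m a Ha))).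
  intros y _. destruct HI as [_ [_ [_ HU]]].
  rewrite <- Rmult_assoc. apply Rmult_le_compat_r; [left; apply exp_pos|]. apply HU.
Qed.

Lemma Q_low m a : (a < n)%nat ->
  xi n nu a m + hnu nu * Pg (gnu nu) j * cm m * gnu nu <= Qf j m a.
Proof.
  intros Ha. set (K := hnu nu * Pg (gnu nu) j * cm m).
  apply (is_int0inf_le _ _ _ _ (is_int0inf_plus _ _ _ _ (xi_int_m m a Ha) (is_int0inf_scal _ _ K (g_int nu Hnu))) (g_exists m a Ha)).
  intros y _. destruct HI as [_ [_ [HL _]]]. specialize (HL (shift m a (J nu y))).
  pose proof (cm_shift m a (J nu y) Ha) as Hc. fold (phi nu y) in Hc.
  assert (HK : 0 <= hnu nu * Pg (gnu nu) j).
  { apply Rmult_le_pos; [left; apply hnu_pos; auto|apply Pg_nonneg; left; apply gnu_pos; auto]. }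
  assert (K * phi nu y <= hnu nu * cm (shift m a (J nu y)) * Pg (gnu nu) j).
  { unfold K. replace (hnu nu * Pg (gnu nu) j * cm m * phi nu y) with ((hnu nu * Pg (gnu nu) j) * (cm m * phi nu y)) by ring.
    replace (hnu nu * cm (shift m a (J nu y)) * Pg (gnu nu) j) with ((hnu nu * Pg (gnu nu) j) * cm (shift m a (J nu y))) by ring.
    apply Rmult_le_compat_l; auto. }
  pose proof (exp_pos (- y)).
  replace (Em (shift m a (J nu y)) * exp (- y) + K * (phi nu y * exp (- y))) with
    ((Em (shift m a (J nu y)) + K * phi nu y) * exp (- y)) by ring.
  apply Rmult_le_compat_r; lra.
Qed.

Lemma Q_mono m m' a : (a < n)%nat -> le_n m m' -> Qf j m a <= Qf j m' a.
Proof.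
  intros Ha Hle. apply (is_int0inf_le _ _ _ _ (g_exists m a Ha) (g_exists m' a Ha)).
  intros y _. apply Rmult_le_compat_r; [left; apply exp_pos|]. destruct HI as [HM _]. apply HM, shift_le; auto.
Qed.

Lemma Q_hom m t a : (a < n)%nat -> Qf j (addc m t) a = exp t * Qf j m a.
Proof.
  intros Ha. unfold Qf at 1.
  replace (fun y => Wf j (shift (addc m t) a (J nu y)) * exp (- y)) with
          (fun y => exp t * (Wf j (shift m a (J nu y)) * exp (- y))).
  - apply int0inf_eq. apply is_int0inf_scal. apply g_exists; auto.
  - apply functional_extensionality. intros y. rewrite shift_addc. destruct HI as [_ [HH _]]. rewrite HH. ring.
Qed.

Lemma inner_eq m a : (a < n)%nat ->
  int0inf (fun y => Vrev n nu j (shift m a (J nu y)) * dens n nu m a y) = / sumexp n m * Qf j m a.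
Proof.
  intros Ha.
  replace (fun y => Vrev n nu j (shift m a (J nu y)) * dens n nu m a y) with
          (fun y => / sumexp n m * (Wf j (shift m a (J nu y)) * exp (- y))).
  - apply int0inf_eq. apply is_int0inf_scal. apply g_exists; auto.
  - apply functional_extensionality. intros y. rewrite dens_id; auto.
Qed.

Lemma W_S m : Wf (S j) m = maxI n (Qf j m).
Proof.
  unfold Wf at 1. simpl Vrev. pose proof (Sig_pos m).
  rewrite (maxI_ext n _ (fun a => / sumexp n m * Qf j m a)) by (intros a Ha; apply inner_eq; auto).
  rewrite maxI_scal by (apply n1 || (left; apply Rinv_0_lt_compat; lra)). field. lra.
Qed.

Lemma IND_S : IND (S j).
Proof.
  unfold IND. repeat split.
  - intros m m' Hle. rewrite !W_S. apply maxI_mono; [apply n1|]. intros a Ha. apply Q_mono; auto.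
  - intros m t. rewrite !W_S. rewrite (maxI_ext n _ (fun a => exp t * Qf j m a)) by (intros a Ha; apply Q_hom; auto).
    apply maxI_scal; [apply n1|left; apply exp_pos].
  - intros m. rewrite W_S. destruct (exists_x12 m) as [x1 [x2 [H1 [H2 [H3 [H4 H5]]]]]].
    eapply Rle_trans; [|apply (maxI_ge n (Qf j m) x2 H2)].
    eapply Rle_trans; [|apply Q_low; auto].
    pose proof (xi_x2_low m x1 x2 H1 H2 H3 H4). simpl Pg.
    replace (hnu nu * cm m * (1 + gnu nu * Pg (gnu nu) j)) with
      (hnu nu * cm m + hnu nu * Pg (gnu nu) j * cm m * gnu nu) by ring. lra.
  - intros m. rewrite W_S. apply maxI_le; [apply n1|]. intros a Ha.
    eapply Rle_trans; [apply Q_up; auto|]. simpl pow.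
    pose proof (xi_up a m Ha). pose proof (pow_le (1 + hnu nu) j ltac:(pose proof (hnu_pos nu Hnu); lra)).
    replace ((1 + hnu nu) * (1 + hnu nu) ^ j * Em m) with ((1 + hnu nu) ^ j * ((1 + hnu nu) * Em m)) by ring.
    apply Rmult_le_compat_l; auto.
Qed.
End Step.

Lemma IND_all j : IND j.
Proof. induction j; [apply IND0|apply IND_S; auto]. Qed.


Lemma qk_eq L k m a : (k < L)%nat -> (a < n)%nat -> qk n nu L k m a = / sumexp n m * Qf (L - S k) m a.
Proof.
  intros Hk Ha. unfold qk, Vstar. apply inner_eq; auto. apply IND_all.
Qed.

Lemma Vstar_eq L k m : (k < L)%nat -> Vstar n nu L k m = maxI n (qk n nu L k m).
Proof.
  intros Hk. unfold Vstar. replace (L - k)%nat with (S (L - S k)) by lia. reflexivity.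
Qed.

Lemma part1 L k m a : (k < L)%nat -> (a < n)%nat ->
  qLB n nu L k m a <= qk n nu L k m a /\ qk n nu L k m a <= qUB n nu L k m a.
Proof.
  intros Hk Ha. rewrite qk_eq by auto. pose proof (Sig_pos m).
  assert (Hi : 0 < / sumexp n m) by (apply Rinv_0_lt_compat; lra).
  replace (L - k - 1)%nat with (L - S k)%nat by lia.
  split.
  - unfold qLB. replace (L - k - 1)%nat with (L - S k)%nat by lia. apply Rmult_le_compat_l; [lra|].
    rewrite geomsum_Pg. eapply Rle_trans; [|apply (Q_low (L - S k) (IND_all _) m a Ha)].
    right. unfold cm. ring.
  - unfold qUB. replace (L - k - 1)%nat with (L - S k)%nat by lia. pose proof (Q_up (L - S k) (IND_all _) m a Ha).
    replace ((1 + hnu nu) ^ (L - S k) / sumexp n m * xi n nu a m) with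
      (/ sumexp n m * ((1 + hnu nu) ^ (L - S k) * xi n nu a m)) by (field; lra).
    apply Rmult_le_compat_l; lra.
Qed.

Lemma part2 L k m x1 x2 : (k < L)%nat -> (x1 < n)%nat -> (x2 < n)%nat -> x1 <> x2 ->
     (forall y, (y < n)%nat -> m y <= m x1) ->
     (forall y, (y < n)%nat -> y <> x1 -> m y <= m x2) ->
     qLB n nu L k m x2 = maxI n (qLB n nu L k m) /\
     maxI n (qLB n nu L k m) <= Vstar n nu L k m /\
     Vstar n nu L k m <= maxI n (qUB n nu L k m) /\
     maxI n (qUB n nu L k m) = qUB n nu L k m x2.
Proof.
  intros Hk H1 H2 H3 H4 H5. pose proof (Sig_pos m).
  assert (Hi : 0 < / sumexp n m) by (apply Rinv_0_lt_compat; lra).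
  pose proof (hnu_pos nu Hnu).
  split; [|split; [|split]].
  - symmetry. apply maxI_at; auto. intros a Ha. unfold qLB. apply Rmult_le_compat_l; [lra|].
    pose proof (xi_ord m x1 x2 H1 H2 H3 H4 H5 a Ha). lra.
  - rewrite Vstar_eq by auto. apply maxI_mono; [apply n1|]. intros a Ha. apply part1; auto.
  - rewrite Vstar_eq by auto. apply maxI_mono; [apply n1|]. intros a Ha. apply part1; auto.
  - apply maxI_at; auto. intros a Ha. unfold qUB. apply Rmult_le_compat_l.
    + apply Rmult_le_pos; [apply pow_le; lra|lra].
    + apply (xi_ord m x1 x2 H1 H2 H3 H4 H5 a Ha).
Qed.
End Main.

Theorem theorem1 (n : nat) (nu : R) (L : nat) :
  (2 <= n)%nat -> 0 < nu < 1 -> (1 <= L)%nat ->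
  (forall (k : nat) (m : nat -> R) (a : nat), (k < L)%nat -> (a < n)%nat ->
     qLB n nu L k m a <= qk n nu L k m a /\ qk n nu L k m a <= qUB n nu L k m a)
  /\
  (forall (k : nat) (m : nat -> R) (x1 x2 : nat), (k < L)%nat ->
     (x1 < n)%nat -> (x2 < n)%nat -> x1 <> x2 ->
     (forall y, (y < n)%nat -> m y <= m x1) ->
     (forall y, (y < n)%nat -> y <> x1 -> m y <= m x2) ->
     qLB n nu L k m x2 = maxI n (qLB n nu L k m) /\
     maxI n (qLB n nu L k m) <= Vstar n nu L k m /\
     Vstar n nu L k m <= maxI n (qUB n nu L k m) /\
     maxI n (qUB n nu L k m) = qUB n nu L k m x2).
Proof.
  intros Hn Hnu HL. split.
  - intros k m a Hk Ha. apply (part1 n nu Hn Hnu); auto.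
  - intros k m x1 x2 Hk H1 H2 H3 H4 H5. apply (part2 n nu Hn Hnu L k m x1 x2); auto.
Qed.
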